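(* Let $u,w\in\mathcal B_\infty$. Then $u\le_0 w$ if and only if (1) $u(i)\ge w(i)$ for all $i>0$, and (2) whenever $0<i<j$ and $u(i)<u(j)$, we have $w(i)<w(j)$.
   Context: Write $\bar i:=-i$. $\mathcal B_n$: permutations $w$ of $\pm[n]$ with $w(\bar a)=\overline{w(a)}$; $\mathcal B_\infty=\bigcup_n\mathcal B_n$ (via fixing $\pm(n+1)$). Length $\ell(w)=\#\{(i,j):0<i<j,\ w(i)>w(j)\}+\sum_{i>0,w(i)<0}|w(i)|$. For $0<i<j$, $t_j=(\bar j,j)$, $t_{\bar ij}=(\bar j,i)(\bar i,j)$. The $0$-Bruhat order $\le_0$ is the partial order generated by covers $u\lessdot_0 w$: $\ell(w)=\ell(u)+1$ and $u^{-1}w\in\{t_j,t_{\bar ij}:0<i<j\}$. *)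

(* Defs.v *)
From mathcomp Require Import all_boot all_order all_algebra.
Set Implicit Arguments. Unset Strict Implicit. Unset Printing Implicit Defensive.
Import Order.TTheory GRing.Theory Num.Theory.
Local Open Scope ring_scope.

(* Signed permutations are modelled as functions int -> int.
   \bar a := -a.  Element of B_infinity: bijective, w(-a) = -w(a), and
   w fixes every a with |a| > n for some n (i.e. w lies in some B_n). *)

Definition supp_bound (n : nat) (w : int -> int) : Prop :=
  forall a : int, (n%:Z < `|a|) -> w a = a.

Definition inBinf (w : int -> int) : Prop :=
  [/\ bijective w, (forall a : int, w (- a) = - w a) & exists n, supp_bound n w].

(* Length computed inside [-N, N]; equals l(w) as soon as supp_bound N w. *)
Definition lengthN (N : nat) (w : int -> int) : nat :=
  (#|[set p : 'I_N.+1 * 'I_N.+1 |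
       [&& (0 < p.1)%N, (p.1 < p.2)%N & (w (Posz (nat_of_ord p.2)) < w (Posz (nat_of_ord p.1)))%R]]|
   + \sum_(1 <= i < N.+1 | (w (Posz i) < 0)%R) absz (w (Posz i)))%N.

Definition t_refl (j : int) : int -> int :=
  fun a => if a == j then - j else if a == - j then j else a.

Definition t_pair (i j : int) : int -> int :=
  fun a => if a == - j then i else if a == i then - j
           else if a == - i then j else if a == j then - i else a.

(* u^{-1} w = t  <->  w = u o t *)
Definition is_reflection_quot (u w : int -> int) : Prop :=
  (exists j : int, 0 < j /\ w =1 u \o t_refl j) \/
  (exists i j : int, [/\ 0 < i, i < j & w =1 u \o t_pair i j]).

Definition cover0 (u w : int -> int) : Prop :=
  [/\ inBinf u, inBinf w,
      (exists N, [/\ supp_bound N u, supp_bound N w & lengthN N w = (lengthN N u).+1])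
    & is_reflection_quot u w].

Inductive bruhat0 : (int -> int) -> (int -> int) -> Prop :=
| bruhat0_refl u w : u =1 w -> bruhat0 u w
| bruhat0_step u v w : bruhat0 u v -> cover0 v w -> bruhat0 u w.

(* Main.v *)
Require Import Defs.
From mathcomp Require Import all_boot all_order all_algebra zify ring.
From Stdlib Require Import FunctionalExtensionality Classical.
Import Order.TTheory GRing.Theory Num.Theory.
Local Open Scope ring_scope.
Set Implicit Arguments. Unset Strict Implicit. Unset Printing Implicit Defensive.

Definition ind (b : bool) : int := if b then 1 else 0.
Definition negp (t : int) : int := if t < 0 then - t else 0.

Lemma B_inj u : inBinf u -> injective u.
Proof. by case=> [/bij_inj]. Qed.

Lemma B_odd u : inBinf u -> forall a, u (- a) = - u a.
Proof. by case. Qed.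

Lemma B0 u : inBinf u -> u 0 = 0.
Proof.
move=> Hu; have := B_odd Hu 0; rewrite oppr0 => H.
have H2 : u 0 + u 0 = 0 by rewrite {1}H addNr.
lia.
Qed.

Lemma B_bound u N : inBinf u -> supp_bound N u -> forall p, `|p| <= N%:Z -> `|u p| <= N%:Z.
Proof.
move=> Hu HN p Hp; case: (lerP `|u p| N%:Z) => // H.
have := HN _ H => /(B_inj Hu) E; rewrite E in H; lia.
Qed.

Lemma B_nz u : inBinf u -> forall p, p != 0 -> u p != 0.
Proof. move=> Hu p Hp; apply/eqP => E; rewrite -(B0 Hu) in E; move/(B_inj Hu): E; lia. Qed.

Lemma B_dist u : inBinf u -> forall p q, 0 < p -> 0 < q -> p != q -> u p != u q /\ u p != - u q.
Proof.
move=> Hu p q Hp Hq Hpq; split; apply/eqP => E.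
  by move/(B_inj Hu): E; lia.
by rewrite -(B_odd Hu) in E; move/(B_inj Hu): E; lia.
Qed.

Lemma B_surj u : inBinf u -> forall t, exists p, u p = t.
Proof. case=> [[g _ gK]] _ _ t; by exists (g t). Qed.

Definition Linv N (f : int -> int) : int :=
  \sum_(1 <= p < N.+1) \sum_(1 <= q < N.+1) ind ((p < q)%N && (f q%:Z < f p%:Z)).
Definition Lneg N (f : int -> int) : int := \sum_(1 <= p < N.+1) negp (f p%:Z).

Lemma Posz_sum I (r : seq I) (P : pred I) (F : I -> nat) :
  ((\sum_(i <- r | P i) F i)%N)%:Z = \sum_(i <- r | P i) (F i)%:Z.
Proof. by rewrite (big_morph Posz PoszD (erefl (Posz 0))). Qed.

Lemma lengthN_Z N f : (lengthN N f)%:Z = Linv N f + Lneg N f.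
Proof.
rewrite /lengthN PoszD; congr (_ + _).
  rewrite -sum1_card Posz_sum big_mkcond /=.
  set S := [set _ | _].
  transitivity (\sum_(i < N.+1) \sum_(j < N.+1) (if (i, j) \in S then 1 else 0 : int)).
    by rewrite pair_bigA; apply: eq_bigr => -[i j] _.
  under eq_bigr => i _ do under eq_bigr => j _ do rewrite inE /=.
  rewrite /Linv -(big_mkord xpredT (fun i => \sum_(j < N.+1) (if [&& (0 < i)%N, (i < j)%N & f j < f i] then 1 else 0 : int))) big_ltn // big1 ?add0r; last first.
    by [].
  apply: eq_big_nat => i /andP[Hi _].
  rewrite -(big_mkord xpredT (fun j => (if [&& (0 < i)%N, (i < j)%N & f j < f i] then 1 else 0 : int))) big_ltn // ltn0 andbF add0r.
  apply: eq_big_nat => j _. by rewrite /ind Hi.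
rewrite Posz_sum /Lneg big_mkcond /=; apply: eq_bigr => i _.
rewrite /negp; case: ifP => // H; lia.
Qed.

Lemma iota_uniq1 N : uniq (index_iota 1 N.+1).
Proof. by rewrite /index_iota iota_uniq. Qed.

Lemma change1 N (f g : int -> int) (j : nat) : (1 <= j <= N)%N ->
  (forall p : nat, p != j -> g p%:Z = f p%:Z) ->
  (Linv N g + Lneg N g) - (Linv N f + Lneg N f) =
  \sum_(1 <= k < N.+1) (ind ((k < j)%N && (g j%:Z < f k%:Z)) - ind ((k < j)%N && (f j%:Z < f k%:Z))
      + (ind ((j < k)%N && (f k%:Z < g j%:Z)) - ind ((j < k)%N && (f k%:Z < f j%:Z))))
  + (negp (g j%:Z) - negp (f j%:Z)).
Proof.
move=> Hj Hgf.
have Hmem : j \in index_iota 1 N.+1 by rewrite mem_index_iota; lia.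
have Hun := iota_uniq1 N.
rewrite opprD addrACA; congr (_ + _); last first.
  rewrite /Lneg (bigD1_seq j) //= [X in _ - X](bigD1_seq j) //= opprD addrACA.
  rewrite -sumrB big1 ?addr0 // => p Hp; rewrite Hgf // subrr //.
pose A (h : int -> int) (p : nat) := \sum_(1 <= q < N.+1) ind ((p < q)%N && (h q%:Z < h p%:Z)).
have E1 : forall p : nat, p != j -> A g p - A f p =
    ind ((p < j)%N && (g j%:Z < f p%:Z)) - ind ((p < j)%N && (f j%:Z < f p%:Z)).
  move=> p Hp; rewrite /A -sumrB (bigD1_seq j) //= big1 ?addr0; first by rewrite (Hgf p Hp).
  move=> q Hq; by rewrite (Hgf p Hp) (Hgf q Hq) subrr.
have E2 : A g j - A f j = \sum_(1 <= k < N.+1)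
    (ind ((j < k)%N && (f k%:Z < g j%:Z)) - ind ((j < k)%N && (f k%:Z < f j%:Z))).
  rewrite /A -sumrB; apply: eq_bigr => k _; case: (eqVneq k j) => [->|Hk]; first by rewrite ltnn.
  by rewrite Hgf.
have -> : Linv N g - Linv N f = \sum_(1 <= p < N.+1) (A g p - A f p) by rewrite sumrB.
rewrite (bigD1_seq j) //= E2 (eq_bigr _ E1).
rewrite [X in _ = X]big_split /= addrC; congr (_ + _).
rewrite [X in _ = X](bigD1_seq j) //= ltnn subrr add0r.
done.
Qed.

Definition hh (t x : int) : int := ind (- t < x) - ind (t <= x).

Lemma U_count u N (s : int) : inBinf u -> supp_bound N u -> 0 < s -> s <= N%:Z ->
  \sum_(1 <= k < N.+1) (ind (u k%:Z == s) + ind (u k%:Z == - s)) = 1.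
Proof.
move=> Hu HN Hs1 Hs2.
have [p Hp] := B_surj Hu s.
have Hpb : `|p| <= N%:Z.
  case: (lerP `|p| N%:Z) => // H; have := HN _ H; lia.
have Hp0 : p != 0 by apply/eqP => E; rewrite E (B0 Hu) in Hp; lia.
pose k0 := absz p.
have Hk0 : k0 \in index_iota 1 N.+1 by rewrite mem_index_iota; lia.
have Hk0v : u k0%:Z = s \/ u k0%:Z = - s.
  case: (ltrP 0 p) => Hp'.
    by left; rewrite /k0 gtz0_abs.
  right; rewrite /k0 ltz0_abs; last by lia.
  by rewrite (B_odd Hu) Hp.
rewrite (bigD1_seq k0) ?iota_uniq1 //= big1 ?addr0.
  case: Hk0v => ->; rewrite /ind; case: ifP; case: ifP => //; lia.
move=> k Hk; rewrite /ind; case: ifP => [/eqP E|_].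
  rewrite -Hp in E; move/(B_inj Hu): E => E; rewrite /k0 in Hk; lia.
case: ifP => // /eqP E; rewrite -Hp -(B_odd Hu) in E; move/(B_inj Hu): E => E.
rewrite /k0 in Hk; lia.
Qed.

Lemma hh_step (s x : int) : hh (s + 1) x = hh s x + (ind (x == s) + ind (x == - s)).
Proof. rewrite /hh /ind; repeat case: ifP; lia. Qed.

Lemma hh_neg (s x : int) : hh (- s) x = - hh s x - (ind (x == s) + ind (x == - s)).
Proof. rewrite /hh /ind; repeat case: ifP; lia. Qed.

Lemma CL_pos u N (m : nat) : inBinf u -> supp_bound N u -> (m <= N)%N ->
  \sum_(1 <= k < N.+1) hh (m.+1)%:Z (u k%:Z) = m%:Z.
Proof.
move=> Hu HN; elim: m => [_|m IH Hm].
  rewrite big_seq big1 // => k; rewrite mem_index_iota => Hk.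
  have : u k%:Z != 0 by apply: (B_nz Hu); lia.
  rewrite /hh /ind; repeat case: ifP; lia.
have -> : (m.+2)%:Z = (m.+1)%:Z + 1 by lia.
under eq_bigr => k _ do rewrite hh_step.
rewrite big_split /= IH; last by lia.
rewrite (U_count Hu HN); lia.
Qed.

Lemma CL u N (t : int) : inBinf u -> supp_bound N u -> t != 0 -> `|t| <= N%:Z ->
  \sum_(1 <= k < N.+1) hh t (u k%:Z) = t - ind (0 < t).
Proof.
move=> Hu HN Ht Htb.
case: (ltrP 0 t) => Ht0.
  have -> : t = (absz t).-1.+1%:Z by lia.
  rewrite CL_pos //; last by lia.
  rewrite /ind; lia.
have -> : t = - ((absz t).-1.+1%:Z) by lia.
under eq_bigr => k _ do rewrite hh_neg.
rewrite sumrB sumrN CL_pos //; last by lia.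
rewrite (U_count Hu HN) /ind /=; lia.
Qed.

Definition e_ch (j : nat) (y x0 : int) (k : nat) (xk : int) : int :=
  ind ((k < j)%N && (y < xk)) - ind ((k < j)%N && (x0 < xk))
  + (ind ((j < k)%N && (xk < y)) - ind ((j < k)%N && (xk < x0))).

Lemma hhE (t x : int) : x != t -> hh t x = ind (- t < x) - ind (t < x).
Proof. rewrite /hh /ind; repeat case: ifP; lia. Qed.

Definition psi1 (j : nat) (a : int) (k : nat) (x : int) := e_ch j (- a) a k x + hh a x.

Lemma psi1_pos j a k x : k != j -> x != a -> x != - a -> 0 < a ->
  0 <= psi1 j a k x /\ (psi1 j a k x = 0 <-> ((k < j)%N -> ~ (- a < x /\ x < a))).
Proof.
move=> Hk H1 H2 Ha; rewrite /psi1 /e_ch hhE //.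
case: (ltngtP k j) => Hkj; last by move/eqP: Hk.
all: rewrite /ind /=; repeat case: ifP; move=> *; split; try lia; split; lia.
Qed.

Lemma psi1_neg j a k x : k != j -> x != a -> x != - a -> a < 0 -> psi1 j a k x <= 0.
Proof.
move=> Hk H1 H2 Ha; rewrite /psi1 /e_ch hhE //.
case: (ltngtP k j) => Hkj; last by move/eqP: Hk.
all: rewrite /ind /=; repeat case: ifP; move=> *; lia.
Qed.

Lemma psi1_j j a : a != 0 -> psi1 j a j a = ind (0 < a) - 1.
Proof. move=> Ha; rewrite /psi1 /e_ch /hh ltnn /ind /=; repeat case: ifP; lia. Qed.

Definition psi2 (i j : nat) (a b : int) (k : nat) (x : int) :=
  e_ch i (- b) a k x + e_ch j (- a) b k x + hh a x + hh b x.

Ltac cmp4 x a b := case: (ltgtP x a) => ?; case: (ltgtP x (- a)) => ?;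
  case: (ltgtP x b) => ?; case: (ltgtP x (- b)) => ?.

Lemma psi2_good i j a b k x : (i < j)%N -> k != i -> k != j ->
  x != a -> x != - a -> x != b -> x != - b -> 0 < a + b -> a < 0 \/ b < 0 ->
  0 <= psi2 i j a b k x /\
  (psi2 i j a b k x = 0 <->
   (((k < i)%N -> ~ (- b < x /\ x < a) /\ ~ (- a < x /\ x < b)) /\
    ((i < k)%N -> (k < j)%N -> ~ (- a < x /\ x < b)))).
Proof.
move=> Hij Hi Hj H1 H2 H3 H4 Hab Hs; rewrite /psi2 /e_ch !hhE //.
case: (ltngtP k i) => Hki; last by move/eqP: Hi.
all: case: (ltngtP k j) => Hkj; last by move/eqP: Hj.
all: try (exfalso; lia).
all: cmp4 x a b; rewrite /ind /=; try lia.
all: split; try lia; split; lia.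
Qed.

Lemma psi2_pos i j a b k x : (i < j)%N -> k != i -> k != j ->
  x != a -> x != - a -> x != b -> x != - b -> 0 < a -> 0 < b -> 0 <= psi2 i j a b k x.
Proof.
move=> Hij Hi Hj H1 H2 H3 H4 Ha Hb; rewrite /psi2 /e_ch !hhE //.
case: (ltngtP k i) => Hki; last by move/eqP: Hi.
all: case: (ltngtP k j) => Hkj; last by move/eqP: Hj.
all: try (exfalso; lia).
all: cmp4 x a b; rewrite /ind /=; lia.
Qed.

Lemma psi2_neg i j a b k x : (i < j)%N -> k != i -> k != j ->
  x != a -> x != - a -> x != b -> x != - b -> a + b < 0 -> psi2 i j a b k x <= 0.
Proof.
move=> Hij Hi Hj H1 H2 H3 H4 Hab; rewrite /psi2 /e_ch !hhE //.
case: (ltngtP k i) => Hki; last by move/eqP: Hi.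
all: case: (ltngtP k j) => Hkj; last by move/eqP: Hj.
all: try (exfalso; lia).
all: cmp4 x a b; rewrite /ind /=; lia.
Qed.

Lemma psi2_ij i j a b : (i < j)%N -> a != 0 -> b != 0 -> a != b -> a != - b ->
  (e_ch i (- b) a i a + e_ch j (- a) b i (- b) + hh a a + hh b a) + psi2 i j a b j b =
  ind (0 < a) + ind (0 < b) - 3 + 2 * ind (0 < a + b).
Proof.
move=> Hij H1 H2 H3 H4; rewrite /psi2 /e_ch /hh !ltnn Hij.
have -> : (j < i)%N = false by lia.
rewrite /= !lexx.
have -> : (- a < - b) = (b < a) by apply/idP/idP; lia.
have -> : (b < - b) = (b < 0) by apply/idP/idP; lia.
have -> : (- a < a) = (0 < a) by apply/idP/idP; lia.
have -> : (- b < a) = (0 < a + b) by apply/idP/idP; lia.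
have -> : (b <= a) = (b < a) by apply/idP/idP; lia.
have -> : (- a < b) = (0 < a + b) by apply/idP/idP; lia.
have -> : (a <= b) = ~~ (b < a) by apply/idP/idP; lia.
have -> : (- b < b) = (0 < b) by apply/idP/idP; lia.
have -> : (b < 0) = ~~ (0 < b) by apply/idP/idP; lia.
rewrite /ind; case Ha: (0 < a); case Hb: (0 < b); case Hba: (b < a); case Hs: (0 < a + b); rewrite /=; lia.
Qed.

Definition L N f := Linv N f + Lneg N f.

Lemma sum_ge0' (r : seq nat) (P : pred nat) (F : nat -> int) :
  (forall k, k \in r -> P k -> 0 <= F k) -> 0 <= \sum_(k <- r | P k) F k.
Proof. move=> H; rewrite big_seq_cond; apply: sumr_ge0 => k /andP[]; exact: H. Qed.

Lemma sum_le0' (r : seq nat) (P : pred nat) (F : nat -> int) :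
  (forall k, k \in r -> P k -> F k <= 0) -> \sum_(k <- r | P k) F k <= 0.
Proof. move=> H; rewrite big_seq_cond; apply: sumr_le0 => k /andP[]; exact: H. Qed.

Lemma sum_eq0' (r : seq nat) (P : pred nat) (F : nat -> int) :
  (forall k, k \in r -> P k -> 0 <= F k) ->
  (\sum_(k <- r | P k) F k = 0 <-> forall k, k \in r -> P k -> F k = 0).
Proof.
move=> H; rewrite big_seq_cond; split.
  move/eqP; rewrite psumr_eq0; last by move=> k /andP[]; exact: H.
  move/allP => Ha k Hk HP; have := Ha k Hk; rewrite Hk HP /= => /eqP //.
move=> H0; apply: big1 => k /andP[]; exact: H0.
Qed.

Lemma negpD a : negp (- a) - negp a = a.
Proof. rewrite /negp; repeat case: ifP; lia. Qed.

Lemma t_refl_fix (j : int) (p : int) : 0 < j -> 0 <= p -> p != j -> t_refl j p = p.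
Proof. move=> *; rewrite /t_refl; repeat case: ifP; lia. Qed.

Lemma delta_refl u N (j : nat) : inBinf u -> supp_bound N u -> (1 <= j <= N)%N ->
  L N (u \o t_refl j%:Z) - L N u =
  ind (0 < u j%:Z) + \sum_(1 <= k < N.+1) psi1 j (u j%:Z) k (u k%:Z).
Proof.
move=> Hu HN Hj.
rewrite /L (@change1 N u (u \o t_refl j%:Z) j Hj); last first.
  move=> p Hp /=; rewrite t_refl_fix //; lia.
have -> : (u \o t_refl j%:Z) j%:Z = - u j%:Z.
  by rewrite /= /t_refl eqxx (B_odd Hu).
rewrite negpD.
have Ha : u j%:Z != 0 by apply: (B_nz Hu); lia.
have Hab : `|u j%:Z| <= N%:Z by apply: (B_bound Hu HN); lia.
have := CL Hu HN Ha Hab => HC.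
rewrite /psi1 [X in _ = _ + X]big_split /= HC /e_ch. set S := \sum_(1 <= k < N.+1) _. lia.
Qed.

Lemma dist_nat u (k j : nat) : inBinf u -> (1 <= k)%N -> (1 <= j)%N -> k != j ->
  u k%:Z != u j%:Z /\ u k%:Z != - u j%:Z.
Proof. move=> Hu Hk Hj Hkj; apply: (B_dist Hu); lia. Qed.

Lemma refl_len u N (j : nat) : inBinf u -> supp_bound N u -> (1 <= j <= N)%N ->
  (L N (u \o t_refl j%:Z) = L N u + 1 <->
   0 < u j%:Z /\ forall k : nat, (1 <= k)%N -> (k < j)%N -> ~ (- u j%:Z < u k%:Z /\ u k%:Z < u j%:Z)).
Proof.
move=> Hu HN Hj.
have D := delta_refl Hu HN Hj.
have Hmem : j \in index_iota 1 N.+1 by rewrite mem_index_iota; lia.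
rewrite (bigD1_seq j) ?iota_uniq1 //= in D.
have Ha : u j%:Z != 0 by apply: (B_nz Hu); lia.
rewrite psi1_j // in D.
set a := u j%:Z in D Ha *.
set S := \sum_(1 <= i < N.+1 | i != j) _ in D.
have Hx : forall k, k \in index_iota 1 N.+1 -> k != j -> u k%:Z != a /\ u k%:Z != - a.
  move=> k; rewrite mem_index_iota => Hk Hkj; apply: dist_nat => //; lia.
case: (ltrP 0 a) => Ha0.
  have Hge : forall k, k \in index_iota 1 N.+1 -> k != j -> 0 <= psi1 j a k (u k%:Z).
    move=> k Hk Hkj; have [H1 H2] := Hx k Hk Hkj; by case: (psi1_pos Hkj H1 H2 Ha0).
  have := sum_eq0' Hge => HE; rewrite -/S in HE.
  split.
    move=> HL; split => // k Hk1 Hkj.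
    have Hk : k \in index_iota 1 N.+1 by rewrite mem_index_iota; lia.
    have Hkj' : k != j by lia.
    have [H1 H2] := Hx k Hk Hkj'.
    have [_ [HP _]] := psi1_pos Hkj' H1 H2 Ha0.
    apply: HP => //; apply: (proj1 HE) => //.
    move: D; rewrite /ind Ha0 HL /=; lia.
  move=> [_ Hc].
  have : S = 0.
    apply/HE => k Hk Hkj; have [H1 H2] := Hx k Hk Hkj.
    have [_ [_ HP]] := psi1_pos Hkj H1 H2 Ha0; apply: HP => Hkj2.
    apply: Hc => //; move: Hk; rewrite mem_index_iota; lia.
  move: D; rewrite /ind Ha0 /=; lia.
have Ha1 : a < 0 by lia.
have : S <= 0.
  apply: sum_le0' => k Hk Hkj; have [H1 H2] := Hx k Hk Hkj; exact: psi1_neg.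
move: D; rewrite /ind; case: ifP => Hc D H; split => HH; exfalso; try case: HH; lia.
Qed.

Lemma t_pair_fix (i j p : int) : 0 < i -> i < j -> 0 <= p -> p != i -> p != j -> t_pair i j p = p.
Proof. move=> *; rewrite /t_pair; repeat case: ifP; lia. Qed.

Lemma t_pair_i (i j : int) : 0 < i -> i < j -> t_pair i j i = - j.
Proof. move=> *; rewrite /t_pair; repeat case: ifP; lia. Qed.

Lemma t_pair_j (i j : int) : 0 < i -> i < j -> t_pair i j j = - i.
Proof. move=> *; rewrite /t_pair; repeat case: ifP; lia. Qed.

Lemma bigD1_seq_cond (r : seq nat) (P : pred nat) j (F : nat -> int) :
  j \in r -> uniq r -> P j ->
  \sum_(k <- r | P k) F k = F j + \sum_(k <- r | P k && (k != j)) F k.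
Proof.
move=> Hj Hr HP; rewrite -big_filter (bigD1_seq j) ?filter_uniq ?mem_filter ?HP //.
by rewrite big_filter_cond.
Qed.

Lemma delta_pair u N (i j : nat) : inBinf u -> supp_bound N u -> (1 <= i)%N -> (i < j)%N -> (j <= N)%N ->
  L N (u \o t_pair i%:Z j%:Z) - L N u =
  2 * ind (0 < u i%:Z) + 2 * ind (0 < u j%:Z) - 3 + 2 * ind (0 < u i%:Z + u j%:Z) +
  \sum_(1 <= k < N.+1 | (k != i) && (k != j)) psi2 i j (u i%:Z) (u j%:Z) k (u k%:Z).
Proof.
move=> Hu HN Hi Hij HjN.
set a := u i%:Z; set b := u j%:Z.
pose u1 := fun p : int => if p == i%:Z then - b else u p.
have Hi' : (1 <= i <= N)%N by lia.
have Hj' : (1 <= j <= N)%N by lia.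
have Hu1 : forall p : nat, p != i -> u1 p%:Z = u p%:Z.
  by move=> p Hp; rewrite /u1 ifF //; apply/negbTE; lia.
have E1 := @change1 N u u1 i Hi' Hu1.
have Hv : forall p : nat, p != j -> (u \o t_pair i%:Z j%:Z) p%:Z = u1 p%:Z.
  move=> p Hp /=; case: (eqVneq p i) => [->|Hpi].
    by rewrite t_pair_i; try lia; rewrite /u1 eqxx (B_odd Hu).
  rewrite t_pair_fix; try lia; by rewrite /u1 ifF //; apply/negbTE; lia.
have E2 := @change1 N u1 (u \o t_pair i%:Z j%:Z) j Hj' Hv.
have Hu1j : u1 j%:Z = b by rewrite /u1 ifF //; apply/negbTE; lia.
have Hu1i : u1 i%:Z = - b by rewrite /u1 eqxx.
rewrite /= t_pair_j in E2; try lia.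
rewrite (B_odd Hu) -/a Hu1j in E2.
rewrite Hu1i -/a in E1.
have Hneg : negp (- b) - negp a + (negp (- a) - negp b) = a + b by rewrite /negp; repeat case: ifP; lia.
have E1' : L N u1 - L N u = \sum_(1 <= k < N.+1) e_ch i (- b) a k (u k%:Z) + (negp (- b) - negp a) := E1.
have E2' : L N (u \o t_pair i%:Z j%:Z) - L N u1 =
   \sum_(1 <= k < N.+1) e_ch j (- a) b k (u1 k%:Z) + (negp (- a) - negp b) := E2.
have Hmi : i \in index_iota 1 N.+1 by rewrite mem_index_iota; lia.
have Hmj : j \in index_iota 1 N.+1 by rewrite mem_index_iota; lia.
have Ha : a != 0 by apply: (B_nz Hu); lia.
have Hb : b != 0 by apply: (B_nz Hu); lia.
have Hab : a != b /\ a != - b by apply: dist_nat => //; lia.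
have Hai : `|a| <= N%:Z by apply: (B_bound Hu HN); lia.
have Hbj : `|b| <= N%:Z by apply: (B_bound Hu HN); lia.
have CLa := CL Hu HN Ha Hai.
have CLb := CL Hu HN Hb Hbj.
rewrite -/a in CLa; rewrite -/b in CLb.
have HS : \sum_(1 <= k < N.+1) (e_ch i (- b) a k (u k%:Z) + e_ch j (- a) b k (u1 k%:Z) + hh a (u k%:Z) + hh b (u k%:Z))
   = \sum_(1 <= k < N.+1) e_ch i (- b) a k (u k%:Z) + \sum_(1 <= k < N.+1) e_ch j (- a) b k (u1 k%:Z)
     + \sum_(1 <= k < N.+1) hh a (u k%:Z) + \sum_(1 <= k < N.+1) hh b (u k%:Z).
  by rewrite !big_split.
rewrite (bigD1_seq i) ?iota_uniq1 // Hu1i -/a in HS.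
rewrite (eq_bigr (fun k => psi2 i j a b k (u k%:Z))) in HS; last first.
  by move=> k Hk; rewrite Hu1 // /psi2.
rewrite (@bigD1_seq_cond (index_iota 1 N.+1) (fun k => k != i) j (fun k => psi2 i j a b k (u k%:Z)) Hmj (iota_uniq1 N)) -/b in HS; last by apply/eqP; lia.
have Hij2 := psi2_ij Hij Ha Hb (proj1 Hab) (proj2 Hab).
set S := (\sum_(1 <= k < N.+1 | (k != i) && (k != j)) psi2 i j a b k (u k%:Z)) in HS *.
rewrite /= in HS. set A1 := \sum_(1 <= k < N.+1) e_ch i _ _ _ _ in HS E1'. set A2 := \sum_(1 <= k < N.+1) e_ch j _ _ _ _ in HS E2'. set A3 := \sum_(1 <= k < N.+1) hh a _ in HS CLa. set A4 := \sum_(1 <= k < N.+1) hh b _ in HS CLb. clearbody S A1 A2 A3 A4. move: Hij2 HS E1' E2' CLa CLb Hneg. clearbody u1 a b. move=> Hij2 HS F1 F2 CLa CLb Hneg. have T1 : L N (u \o t_pair i j) - L N u = A1 + A2 + a + b by lia. have HS' : (e_ch i (- b) a i a + e_ch j (- a) b i (- b) + hh a a + hh b a) + (psi2 i j a b j b + S) = A1 + A2 + A3 + A4 := HS.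
have T3 : A1 + A2 = (e_ch i (- b) a i a + e_ch j (- a) b i (- b) + hh a a + hh b a + psi2 i j a b j b) + S - A3 - A4.
  rewrite (_ : A1 + A2 = (A1 + A2 + A3 + A4) - A3 - A4); last by ring. rewrite -HS'; ring.
rewrite T1 T3 Hij2 CLa CLb; ring.
Qed.

Lemma pair_len u N (i j : nat) : inBinf u -> supp_bound N u -> (1 <= i)%N -> (i < j)%N -> (j <= N)%N ->
  (L N (u \o t_pair i%:Z j%:Z) = L N u + 1 <->
   [/\ 0 < u i%:Z + u j%:Z, u i%:Z < 0 \/ u j%:Z < 0,
    (forall k : nat, (1 <= k)%N -> (k < i)%N ->
        ~ (- u j%:Z < u k%:Z /\ u k%:Z < u i%:Z) /\ ~ (- u i%:Z < u k%:Z /\ u k%:Z < u j%:Z)) &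
    (forall k : nat, (i < k)%N -> (k < j)%N -> ~ (- u i%:Z < u k%:Z /\ u k%:Z < u j%:Z))]).
Proof.
move=> Hu HN Hi Hij HjN.
have D := delta_pair Hu HN Hi Hij HjN.
set a := u i%:Z in D *; set b := u j%:Z in D *.
set S := \sum_(1 <= k < N.+1 | _) _ in D.
have Ha : a != 0 by apply: (B_nz Hu); lia.
have Hb : b != 0 by apply: (B_nz Hu); lia.
have Hab : a != b /\ a != - b by apply: dist_nat => //; lia.
have Hx : forall k, k \in index_iota 1 N.+1 -> (k != i) && (k != j) ->
    [/\ u k%:Z != a, u k%:Z != - a, u k%:Z != b & u k%:Z != - b].
  move=> k; rewrite mem_index_iota => Hk /andP[Hki Hkj].
  have [H1 H2] : u k%:Z != a /\ u k%:Z != - a by apply: dist_nat => //; lia.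
  have [H3 H4] : u k%:Z != b /\ u k%:Z != - b by apply: dist_nat => //; lia.
  by split.
case: (ltrP 0 (a + b)) => Hs; last first.
  have Hs' : a + b < 0 by case/andP: Hab => *; lia.
  have : S <= 0.
    apply: sum_le0' => k Hk /andP[Hki Hkj].
    have [H1 H2 H3 H4] := Hx k Hk (introT andP (conj Hki Hkj)).
    exact: psi2_neg.
  move: D; rewrite /ind; case: ifP; case: ifP; case: ifP => ? ? ? D H; split => HH; try (case: HH; lia); lia.
case: (boolP ((a < 0) || (b < 0))) => Hn; last first.
  have : 0 <= S.
    apply: sum_ge0' => k Hk /andP[Hki Hkj].
    have [H1 H2 H3 H4] := Hx k Hk (introT andP (conj Hki Hkj)).
    apply: psi2_pos => //; lia.
  move: D; rewrite /ind; case: ifP; case: ifP; case: ifP => ? ? ? D H; split => HH; try (case: HH; lia); lia.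
have Hn' : a < 0 \/ b < 0 by case/orP: Hn; [left|right].
have Hge : forall k, k \in index_iota 1 N.+1 -> (k != i) && (k != j) -> 0 <= psi2 i j a b k (u k%:Z).
  move=> k Hk Hk2; have [H1 H2 H3 H4] := Hx k Hk Hk2; case/andP: Hk2 => Hki Hkj.
  by case: (psi2_good Hij Hki Hkj H1 H2 H3 H4 Hs Hn').
have HE := sum_eq0' Hge; rewrite -/S in HE.
have Hc : 2 * ind (0 < a) + 2 * ind (0 < b) - 3 + 2 * ind (0 < a + b) = 1.
  by rewrite /ind; case: ifP; case: ifP; case: ifP => /=; lia.
rewrite Hc in D.
split.
  move=> HL; have HS0 : S = 0 by move: D; rewrite HL; lia.
  have HP := proj1 HE HS0.
  split => //.
    move=> k Hk1 Hki.
    have Hk : k \in index_iota 1 N.+1 by rewrite mem_index_iota; lia.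
    have Hk2 : (k != i) && (k != j) by apply/andP; split; lia.
    have [H1 H2 H3 H4] := Hx k Hk Hk2; case/andP: Hk2 => Hki' Hkj'.
    have [_ [HQ _]] := psi2_good Hij Hki' Hkj' H1 H2 H3 H4 Hs Hn'.
    by apply: (proj1 (HQ (HP k Hk (introT andP (conj Hki' Hkj'))))).
  move=> k Hki Hkj.
  have Hk : k \in index_iota 1 N.+1 by rewrite mem_index_iota; lia.
  have Hk2 : (k != i) && (k != j) by apply/andP; split; lia.
  have [H1 H2 H3 H4] := Hx k Hk Hk2; case/andP: Hk2 => Hki' Hkj'.
  have [_ [HQ _]] := psi2_good Hij Hki' Hkj' H1 H2 H3 H4 Hs Hn'.
  by apply: (proj2 (HQ (HP k Hk (introT andP (conj Hki' Hkj'))))).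
case=> _ _ C1 C2.
have HS0 : S = 0.
  apply/HE => k Hk Hk2.
  have [H1 H2 H3 H4] := Hx k Hk Hk2; case/andP: Hk2 => Hki' Hkj'.
  have [_ [_ HQ]] := psi2_good Hij Hki' Hkj' H1 H2 H3 H4 Hs Hn'.
  apply: HQ; split.
    move=> Hki; apply: C1 => //; move: Hk; rewrite mem_index_iota; lia.
  exact: C2.
move: D; rewrite HS0; lia.
Qed.

Definition Rrel (u w : int -> int) :=
  (forall i : int, 0 < i -> w i <= u i) /\
  (forall i j : int, 0 < i -> i < j -> u i < u j -> w i < w j).

Lemma Rrel_refl u : Rrel u u.
Proof. by split => // *; lia. Qed.

Lemma Rrel_trans u v w : Rrel u v -> Rrel v w -> Rrel u w.
Proof.
move=> [A1 A2] [B1 B2]; split.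
  move=> i Hi; have := A1 i Hi; have := B1 i Hi; lia.
move=> i j Hi Hij H; apply: B2 => //; exact: A2.
Qed.

Lemma lengthN_L N f : (lengthN N f)%:Z = L N f.
Proof. by rewrite lengthN_Z. Qed.

Lemma absK (p : int) : 0 <= p -> (absz p)%:Z = p.
Proof. move=> H; lia. Qed.

Lemma cover_R u w : cover0 u w -> Rrel u w.
Proof.
case=> Hu Hw [N [HNu HNw HL]] Hq.
have HL' : L N w = L N u + 1 by rewrite -!lengthN_L HL; lia.
have Hbd : forall p, `|p| <= N%:Z -> `|u p| <= N%:Z := B_bound Hu HNu.
case: Hq => [[j [Hj Hw']]|[i [j [Hi Hij Hw']]]].
  have Ew : w = u \o t_refl j by apply: functional_extensionality.
  have HjN : j <= N%:Z.
    case: (lerP j N%:Z) => // H.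
    have H1 := HNw j (_ : N%:Z < `|j|); have H2 := HNu j (_ : N%:Z < `|j|).
    move: (Hw' j); rewrite /= /t_refl eqxx (B_odd Hu) H1 ?H2; lia.
  rewrite -(absK (ltW Hj)) in Ew.
  have Hjn : (1 <= absz j <= N)%N by lia.
  rewrite Ew in HL'.
  have [Ha Hc] := proj1 (refl_len Hu HNu Hjn) HL'.
  rewrite absK in Ha Hc; last by lia.
  rewrite Ew absK; last by lia.
  have Ej : t_refl j j = - j by rewrite /t_refl eqxx.
  split.
    move=> p Hp /=; case: (eqVneq p j) => [->|Hpj].
      rewrite Ej (B_odd Hu); lia.
    rewrite t_refl_fix //; lia.
  move=> p q Hp Hpq Hup /=.
  case: (eqVneq p j) => [Ep|Hpj]; case: (eqVneq q j) => [Eq|Hqj].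
  - lia.
  - rewrite Ep Ej (B_odd Hu) t_refl_fix //; try lia.
    rewrite Ep in Hup; lia.
  - rewrite Eq Ej (B_odd Hu) t_refl_fix //; try lia.
    rewrite Eq in Hup.
    have := Hc (absz p) (_ : (1 <= absz p)%N) (_ : (absz p < absz j)%N).
    rewrite absK; last by lia.
    have [_ Hd] := B_dist Hu Hp Hj Hpj.
    move=> H; lia.
  - rewrite !t_refl_fix //; lia.
have Ew : w = u \o t_pair i j by apply: functional_extensionality.
have HjN : j <= N%:Z.
  case: (lerP j N%:Z) => // H.
  have H1 : w j = j by apply: HNw; lia.
  move: H1; rewrite Ew /= t_pair_j // (B_odd Hu).
  case: (lerP i N%:Z) => Hi'.
    have := Hbd i (_ : `|i| <= N%:Z); lia.
  rewrite HNu; lia.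
have Hin : (1 <= absz i)%N by lia.
have Hijn : (absz i < absz j)%N by lia.
have HjNn : (absz j <= N)%N by lia.
rewrite Ew in HL'; rewrite -(absK (ltW Hi)) -(absK (_ : 0 <= j)) in HL'; last by lia.
have [Hs Hn C1 C2] := proj1 (pair_len Hu HNu Hin Hijn HjNn) HL'.
rewrite !absK in Hs Hn C1 C2; try lia.
rewrite Ew.
have Ei := t_pair_i Hi Hij; have Ej := t_pair_j Hi Hij.
have Hj0 : 0 < j by lia.
have Hij' : i != j by lia.
have [Dab1 Dab2] := B_dist Hu Hi Hj0 Hij'.
split.
  move=> p Hp /=; case: (eqVneq p i) => [->|Hpi].
    rewrite Ei (B_odd Hu); lia.
  case: (eqVneq p j) => [->|Hpj].
    rewrite Ej (B_odd Hu); lia.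
  rewrite t_pair_fix //; lia.
move=> p q Hp Hpq Hup /=.
have Hq : 0 < q by lia.
case: (eqVneq p i) => [Ep|Hpi]; case: (eqVneq q i) => [Eq|Hqi];
  case: (eqVneq p j) => [Ep'|Hpj]; case: (eqVneq q j) => [Eq'|Hqj]; try lia.
- rewrite Ep Eq' Ei Ej !(B_odd Hu); rewrite Ep Eq' in Hup; lia.
- rewrite Ep Ei (B_odd Hu) t_pair_fix //; try lia; rewrite Ep in Hup; lia.
- rewrite Eq Ei (B_odd Hu) t_pair_fix //; try lia; rewrite Eq in Hup.
  have Hpn : (1 <= absz p)%N by lia.
  have Hpin : (absz p < absz i)%N by lia.
  have [Hc _] := C1 (absz p) Hpn Hpin.
  rewrite absK in Hc; last by lia.
  have [_ Hd] := B_dist Hu Hp Hj0 Hpj.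
  lia.
- rewrite Ep' Ej (B_odd Hu) t_pair_fix //; try lia; rewrite Ep' in Hup; lia.
- rewrite Eq' Ej (B_odd Hu) t_pair_fix //; try lia; rewrite Eq' in Hup.
  have Hpn : (1 <= absz p)%N by lia.
  have [_ Hd] := B_dist Hu Hp Hi Hpi.
  case: (ltrP p i) => Hpi2.
    have Hpin : (absz p < absz i)%N by lia.
    have [_ Hc] := C1 (absz p) Hpn Hpin.
    rewrite absK in Hc; last by lia.
    lia.
  have Hpin : (absz i < absz p)%N by lia.
  have Hpjn : (absz p < absz j)%N by lia.
  have Hc := C2 (absz p) Hpin Hpjn.
  rewrite absK in Hc; last by lia.
  lia.
- rewrite !t_pair_fix //; lia.
Qed.

Lemma ex_min (P : nat -> Prop) (f : nat -> int) (n : nat) :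
  (exists k, (1 <= k <= n)%N /\ P k) ->
  exists k, [/\ (1 <= k <= n)%N, P k & forall k', (1 <= k' <= n)%N -> P k' -> f k <= f k'].
Proof.
elim: n => [[k [Hk _]]|n IH [k0 [Hk0 Pk0]]]; first lia.
case: (classic (exists k, (1 <= k <= n)%N /\ P k)) => [Hex|Hnex].
  have [k [Hk Pk Hmin]] := IH Hex.
  case: (classic (P n.+1)) => Pn.
    case: (lerP (f k) (f n.+1)) => Hc.
      exists k; split => //; first lia.
      move=> k' Hk' Pk'; case: (ltnP k' n.+1) => H.
        apply: Hmin => //; lia.
      have -> : k' = n.+1 by lia.
      done.
    exists n.+1; split => //; first lia.
    move=> k' Hk' Pk'; case: (ltnP k' n.+1) => H.
      have := Hmin k' (_ : (1 <= k' <= n)%N) Pk'; lia.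
    have -> : k' = n.+1 by lia.
    done.
  exists k; split => //; first lia.
  move=> k' Hk' Pk'; case: (ltnP k' n.+1) => H.
    apply: Hmin => //; lia.
  have E : k' = n.+1 by lia.
  by rewrite E in Pk'.
have E0 : k0 = n.+1.
  case: (ltnP k0 n.+1) => H; last by lia.
  exfalso; apply: Hnex; exists k0; split => //; lia.
exists n.+1; split; first lia.
  by rewrite -E0.
move=> k' Hk' Pk'; case: (ltnP k' n.+1) => H.
  exfalso; apply: Hnex; exists k'; split => //; lia.
have -> : k' = n.+1 by lia.
done.
Qed.

Lemma t_refl_invol (j x : int) : t_refl j (t_refl j x) = x.
Proof. rewrite /t_refl; repeat case: ifP; lia. Qed.

Lemma t_refl_odd (j x : int) : 0 < j -> t_refl j (- x) = - t_refl j x.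
Proof. move=> Hj; rewrite /t_refl; repeat case: ifP; lia. Qed.

Lemma t_pair_invol (i j x : int) : 0 < i -> i < j -> t_pair i j (t_pair i j x) = x.
Proof. move=> *; rewrite /t_pair; repeat case: ifP; lia. Qed.

Lemma t_pair_odd (i j x : int) : 0 < i -> i < j -> t_pair i j (- x) = - t_pair i j x.
Proof. move=> *; rewrite /t_pair; repeat case: ifP; lia. Qed.

Lemma inB_comp u N (t : int -> int) : inBinf u -> supp_bound N u ->
  (forall x, t (t x) = x) -> (forall x, t (- x) = - t x) -> (forall x, N%:Z < `|x| -> t x = x) ->
  inBinf (u \o t) /\ supp_bound N (u \o t).
Proof.
move=> Hu HN Ht1 Ht2 Ht3.
have Hs : supp_bound N (u \o t) by move=> x Hx /=; rewrite Ht3 // HN.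
split => //; split.
- case: Hu => Hb _ _; apply: bij_comp => //; exists t => x; exact: Ht1.
- by move=> a /=; rewrite Ht2 (B_odd Hu).
- by exists N.
Qed.

Lemma exists_A1 u w N (j : nat) : inBinf u -> inBinf w -> supp_bound N u -> supp_bound N w ->
  (1 <= j <= N)%N ->
  (forall p : nat, (1 <= p <= N)%N -> w p%:Z <= u p%:Z) -> w j%:Z < u j%:Z ->
  (forall p : nat, (1 <= p <= N)%N -> w p%:Z < u p%:Z -> u j%:Z <= u p%:Z) ->
  exists k : nat, [/\ (1 <= k <= N)%N, - u j%:Z < u k%:Z, u k%:Z <= - w j%:Z & w k%:Z <= - u j%:Z].
Proof.
move=> Hu Hw HNu HNw Hj R1 Hjlt Hmin.
set a := u j%:Z in Hjlt Hmin *; set c := w j%:Z in Hjlt *.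
have Ha : a != 0 by apply: (B_nz Hu); lia.
have Hc : c != 0 by apply: (B_nz Hw); lia.
have Hab : `|a| <= N%:Z by apply: (B_bound Hu HNu); lia.
have Hcb : `|c| <= N%:Z by apply: (B_bound Hw HNw); lia.
have E1 := CL Hu HNu Ha Hab; have E2 := CL Hw HNw Ha Hab.
have E3 := CL Hu HNu Hc Hcb; have E4 := CL Hw HNw Hc Hcb.
pose Q k := (ind (- a < u k%:Z) - ind (- c < u k%:Z)) - (ind (- a < w k%:Z) - ind (- c < w k%:Z)).
pose T k := ind (a <= u k%:Z) - ind (a <= w k%:Z) - ind (c <= u k%:Z) + ind (c <= w k%:Z).
pose A k := ind ([&& - a < u k%:Z, u k%:Z <= - c & w k%:Z <= - a]).
have HQT : \sum_(1 <= k < N.+1) Q k = \sum_(1 <= k < N.+1) T k.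
  apply/eqP; rewrite -subr_eq0 -sumrB.
  have -> : \sum_(1 <= k < N.+1) (Q k - T k) =
     \sum_(1 <= k < N.+1) hh a (u k%:Z) - \sum_(1 <= k < N.+1) hh a (w k%:Z)
     - \sum_(1 <= k < N.+1) hh c (u k%:Z) + \sum_(1 <= k < N.+1) hh c (w k%:Z).
    rewrite -!sumrB -big_split /=; apply: eq_bigr => k _; rewrite /Q /T /hh; ring.
  by rewrite E1 E2 E3 E4; apply/eqP; ring.
have Hmem : j \in index_iota 1 N.+1 by rewrite mem_index_iota; lia.
have HT : 1 <= \sum_(1 <= k < N.+1) T k.
  rewrite (bigD1_seq j) ?iota_uniq1 //=.
  have -> : T j = 1 by rewrite /T /ind -/a -/c lexx; repeat case: ifP; lia.
  rewrite -[X in X <= _]addr0 lerD2l.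
  apply: sum_ge0' => k; rewrite mem_index_iota => Hk _.
  have := R1 k Hk; have := Hmin k Hk; rewrite /T /ind; repeat case: ifP; lia.
have HQA : \sum_(1 <= k < N.+1) Q k <= \sum_(1 <= k < N.+1) A k.
  rewrite big_seq_cond [X in _ <= X]big_seq_cond; apply: ler_sum => k /andP[]; rewrite mem_index_iota => Hk _.
  have := R1 k Hk; rewrite /Q /A /ind; repeat (case: ifP => /= ?); lia.
apply: NNPP => Hno.
have : \sum_(1 <= k < N.+1) A k = 0.
  rewrite big_seq; apply: big1 => k; rewrite mem_index_iota => Hk.
  rewrite /A /ind; case: ifP => // /and3P[H1 H2 H3]; exfalso; apply: Hno; exists k; split => //.
lia.
Qed.

Definition mu N (f w : int -> int) : int := \sum_(1 <= k < N.+1) (f k%:Z - w k%:Z).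

Lemma mk_cover u N v : inBinf u -> supp_bound N u -> inBinf v -> supp_bound N v ->
  L N v = L N u + 1 -> is_reflection_quot u v -> cover0 u v.
Proof.
move=> Hu HNu Hv HNv HL Hq; split => //; exists N; split => //.
have := lengthN_L N v; have := lengthN_L N u; lia.
Qed.

Lemma measure_lt u v w N (j : nat) : (1 <= j <= N)%N ->
  (forall p : nat, (1 <= p <= N)%N -> v p%:Z <= u p%:Z) -> v j%:Z < u j%:Z -> mu N v w < mu N u w.
Proof.
move=> Hj Hle Hlt; rewrite -subr_gt0 /mu -sumrB.
have Hmem : j \in index_iota 1 N.+1 by rewrite mem_index_iota; lia.
rewrite (bigD1_seq j) ?iota_uniq1 //=.
have : 0 <= \sum_(k <- index_iota 1 N.+1 | k != j) (u k%:Z - w k%:Z - (v k%:Z - w k%:Z)).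
  apply: sum_ge0' => k; rewrite mem_index_iota => Hk _; have := Hle k Hk; lia.
set S := \sum_(k <- _ | _) _; move=> HS.
have : 0 < u j%:Z - w j%:Z - (v j%:Z - w j%:Z) by lia.
move=> H; exact: ltr_wpDr HS H.
Qed.

Lemma step_refl u w N (j : nat) : inBinf u -> inBinf w -> supp_bound N u -> supp_bound N w -> Rrel u w ->
  (1 <= j <= N)%N -> 0 < u j%:Z -> w j%:Z <= - u j%:Z ->
  (forall p : int, 0 < p -> w p < u p -> u j%:Z <= u p) ->
  (forall p : int, 0 < p -> - u j%:Z < u p -> w p <= - u j%:Z -> u j%:Z <= u p) ->
  exists v, [/\ cover0 u v, Rrel v w, inBinf v, supp_bound N v & mu N v w < mu N u w].
Proof.
move=> Hu Hw HNu HNw [R1 R2] Hj Ha Hwj MinD MinK.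
set a := u j%:Z in Ha Hwj MinD MinK.
have Hj0 : 0 < j%:Z by lia.
have Hfix : forall x, N%:Z < `|x| -> t_refl j%:Z x = x.
  move=> x Hx; rewrite /t_refl; repeat case: ifP; lia.
have [Hv HNv] := @inB_comp u N (t_refl j%:Z) Hu HNu (t_refl_invol _) (fun x => t_refl_odd x Hj0) Hfix.
have Ej : t_refl j%:Z j%:Z = - j%:Z by rewrite /t_refl eqxx.
have Vj : (u \o t_refl j%:Z) j%:Z = - a by rewrite /= Ej (B_odd Hu).
have Vp : forall p : int, 0 < p -> p != j%:Z -> (u \o t_refl j%:Z) p = u p.
  by move=> p Hp Hpj /=; rewrite t_refl_fix //; lia.
exists (u \o t_refl j%:Z); split => //.
- apply: (mk_cover Hu HNu Hv HNv); last by left; exists j%:Z; split.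
  apply/(refl_len Hu HNu Hj); split => // k Hk1 Hkj [H1 H2].
  have Hk0 : 0 < k%:Z by lia.
  have := R2 k%:Z j%:Z Hk0 (_ : k%:Z < j%:Z) H2.
  move=> H3; have := MinD k%:Z Hk0 (_ : w k%:Z < u k%:Z); lia.
- split.
    move=> p Hp; case: (eqVneq p j%:Z) => [->|Hpj]; first by rewrite Vj.
    by rewrite Vp //; apply: R1.
  move=> p q Hp Hpq; have Hq : 0 < q by lia.
  case: (eqVneq p j%:Z) => [Ep|Hpj]; case: (eqVneq q j%:Z) => [Eq|Hqj]; try lia.
  + rewrite Ep Vj Vp // => H.
    case: (ltrP a (u q)) => Hc.
      apply: R2 => //; lia.
    have [Hd _] := B_dist Hu Hq Hj0 Hqj.
    case: (lerP (w q) (- a)) => Hwq; last by lia.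
    have := MinK q Hq (_ : - a < u q) Hwq; lia.
  + rewrite Eq Vj Vp // => H.
    rewrite -Eq; apply: R2 => //; rewrite Eq; lia.
  + by rewrite !Vp //; apply: R2.
- apply: (@measure_lt u _ w N j) => //.
    move=> p Hp; case: (eqVneq p j) => [->|Hpj]; first by rewrite Vj; lia.
    rewrite Vp //; lia.
  by rewrite Vj; lia.
Qed.

Lemma step_pair u w N (j k : nat) : inBinf u -> inBinf w -> supp_bound N u -> supp_bound N w -> Rrel u w ->
  (1 <= j <= N)%N -> (1 <= k <= N)%N -> k != j ->
  u j%:Z < 0 -> - u j%:Z < u k%:Z -> w k%:Z <= - u j%:Z -> w j%:Z <= - u k%:Z ->
  (forall p : int, 0 < p -> w p < u p -> u j%:Z <= u p) ->
  (forall p : int, 0 < p -> - u j%:Z < u p -> w p <= - u j%:Z -> u k%:Z <= u p) ->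
  exists v, [/\ cover0 u v, Rrel v w, inBinf v, supp_bound N v & mu N v w < mu N u w].
Proof.
move=> Hu Hw HNu HNw [R1 R2] Hj Hk Hkj Ha Hab Hwk Hwj MinD MinK.
set a := u j%:Z in Ha Hab Hwk Hwj MinD MinK *.
set b := u k%:Z in Hab Hwj MinK *.
have Hj0 : 0 < j%:Z by lia.
have Hk0 : 0 < k%:Z by lia.
have Hkj' : k%:Z != j%:Z by lia.
pose i0 := minn j k; pose j0 := maxn j k.
have Hi0 : 0 < i0%:Z by rewrite /i0; lia.
have Hij0 : i0%:Z < j0%:Z by rewrite /i0 /j0; lia.
have Hfix : forall x, N%:Z < `|x| -> t_pair i0%:Z j0%:Z x = x.
  move=> x Hx; rewrite /t_pair /i0 /j0; repeat case: ifP; lia.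
have [Hv HNv] := @inB_comp u N (t_pair i0%:Z j0%:Z) Hu HNu (fun x => t_pair_invol x Hi0 Hij0)
  (fun x => t_pair_odd x Hi0 Hij0) Hfix.
set v := u \o t_pair i0%:Z j0%:Z in Hv HNv *.
have Vj : v j%:Z = - b.
  rewrite /v /=; case: (ltngtP j k) => Hc.
  - have -> : i0 = j by rewrite /i0; lia.
    have -> : j0 = k by rewrite /j0; lia.
    rewrite t_pair_i ?(B_odd Hu) //; lia.
  - have -> : i0 = k by rewrite /i0; lia.
    have -> : j0 = j by rewrite /j0; lia.
    rewrite t_pair_j ?(B_odd Hu) //; lia.
  - by move/eqP: Hkj; rewrite Hc.
have Vk : v k%:Z = - a.
  rewrite /v /=; case: (ltngtP j k) => Hc.
  - have -> : i0 = j by rewrite /i0; lia.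
    have -> : j0 = k by rewrite /j0; lia.
    rewrite t_pair_j ?(B_odd Hu) //; lia.
  - have -> : i0 = k by rewrite /i0; lia.
    have -> : j0 = j by rewrite /j0; lia.
    rewrite t_pair_i ?(B_odd Hu) //; lia.
  - by move/eqP: Hkj; rewrite Hc.
have Vp : forall p : int, 0 < p -> p != j%:Z -> p != k%:Z -> v p = u p.
  move=> p Hp Hpj Hpk; rewrite /v /= t_pair_fix //; rewrite /i0 /j0; lia.
have Dj : forall q : int, 0 < q -> q != j%:Z -> u q != a /\ u q != - a.
  by move=> q Hq Hqj; apply: (B_dist Hu).
have Dk : forall q : int, 0 < q -> q != k%:Z -> u q != b /\ u q != - b.
  by move=> q Hq Hqk; apply: (B_dist Hu).
have F1 : forall p : int, 0 < p -> p != j%:Z -> p != k%:Z -> - a < u p -> u p < b -> k%:Z < p.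
  move=> p Hp Hpj Hpk H1 H2.
  case: (lerP (w p) (- a)) => Hwp.
    have := MinK p Hp H1 Hwp; lia.
  case: (ltrP p k%:Z) => Hpk2; last by lia.
  have := R2 p k%:Z Hp Hpk2 H2; lia.
have F2 : forall p : int, 0 < p -> p != j%:Z -> p != k%:Z -> - b < u p -> u p < a -> j%:Z < p.
  move=> p Hp Hpj Hpk H1 H2.
  have H3 := R1 p Hp.
  case: (ltrP (w p) (u p)) => Hwp.
    have := MinD p Hp Hwp; lia.
  case: (ltrP p j%:Z) => Hpj2; last by lia.
  have := R2 p j%:Z Hp Hpj2 H2; lia.
exists v; split => //.
- apply: (mk_cover Hu HNu Hv HNv); last by right; exists i0%:Z, j0%:Z; split.
  have Hi0n : (1 <= i0)%N by rewrite /i0; lia.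
  have Hij0n : (i0 < j0)%N by rewrite /i0 /j0; lia.
  have Hj0n : (j0 <= N)%N by rewrite /j0; lia.
  apply/(pair_len Hu HNu Hi0n Hij0n Hj0n).
  case: (ltngtP j k) => Hc.
  + have Ei : i0 = j by rewrite /i0; lia.
    have Ej : j0 = k by rewrite /j0; lia.
    rewrite Ei Ej -/a -/b; split; try lia.
      move=> p Hp1 Hpi; have Hp : 0 < p%:Z by lia.
      split => -[H1 H2].
        have := F2 p%:Z Hp (_ : p%:Z != j%:Z) (_ : p%:Z != k%:Z) H1 H2; lia.
      have := F1 p%:Z Hp (_ : p%:Z != j%:Z) (_ : p%:Z != k%:Z) H1 H2; lia.
    move=> p Hp1 Hp2 [H1 H2]; have Hp : 0 < p%:Z by lia.
    have := F1 p%:Z Hp (_ : p%:Z != j%:Z) (_ : p%:Z != k%:Z) H1 H2; lia.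
  + have Ei : i0 = k by rewrite /i0; lia.
    have Ej : j0 = j by rewrite /j0; lia.
    rewrite Ei Ej -/a -/b; split; try lia.
      move=> p Hp1 Hpi; have Hp : 0 < p%:Z by lia.
      split => -[H1 H2].
        have := F1 p%:Z Hp (_ : p%:Z != j%:Z) (_ : p%:Z != k%:Z) H1 H2; lia.
      have := F2 p%:Z Hp (_ : p%:Z != j%:Z) (_ : p%:Z != k%:Z) H1 H2; lia.
    move=> p Hp1 Hp2 [H1 H2]; have Hp : 0 < p%:Z by lia.
    have := F2 p%:Z Hp (_ : p%:Z != j%:Z) (_ : p%:Z != k%:Z) H1 H2; lia.
  + by move/eqP: Hkj; rewrite Hc.
- split.
    move=> p Hp; case: (eqVneq p j%:Z) => [->|Hpj]; first by rewrite Vj.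
    case: (eqVneq p k%:Z) => [->|Hpk]; first by rewrite Vk.
    by rewrite Vp //; apply: R1.
  move=> p q Hp Hpq; have Hq : 0 < q by lia.
  case: (eqVneq p j%:Z) => [Ep|Hpj]; case: (eqVneq q j%:Z) => [Eq|Hqj];
    case: (eqVneq p k%:Z) => [Ep'|Hpk]; case: (eqVneq q k%:Z) => [Eq'|Hqk]; try lia.
  + rewrite Ep Eq' Vj Vk => _; apply: R2; lia.
  + rewrite Ep Vj Vp // => H.
    case: (lerP (w q) (- b)) => Hwq; last by lia.
    have [Dq _] := Dj q Hq Hqj.
    have := MinD q Hq (_ : w q < u q); move=> Hm.
    rewrite -Ep; apply: R2 => //; rewrite Ep; lia.
  + rewrite Ep' Eq Vk Vj; lia.
  + rewrite Eq Vj Vp // => H.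
    rewrite -Eq; apply: R2 => //; rewrite Eq; lia.
  + rewrite Ep' Vk Vp // => H.
    case: (lerP (w q) (- a)) => Hwq; last by lia.
    have [Dq _] := Dk q Hq Hqk.
    have := MinK q Hq H Hwq; move=> Hm.
    rewrite -Ep'; apply: R2 => //; rewrite Ep'; lia.
  + rewrite Eq' Vk Vp // => H.
    rewrite -Eq'; apply: R2 => //; rewrite Eq'; lia.
  + by rewrite !Vp //; apply: R2.
- apply: (@measure_lt u _ w N j) => //; last by rewrite Vj; lia.
  move=> p Hp; case: (eqVneq p j) => [->|Hpj]; first by rewrite Vj; lia.
  case: (eqVneq p k) => [->|Hpk]; first by rewrite Vk; lia.
  rewrite Vp //; lia.
Qed.

Lemma step u w N : inBinf u -> inBinf w -> supp_bound N u -> supp_bound N w -> Rrel u w ->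
  (exists p : nat, (1 <= p <= N)%N /\ u p%:Z != w p%:Z) ->
  exists v, [/\ cover0 u v, Rrel v w, inBinf v, supp_bound N v & mu N v w < mu N u w].
Proof.
move=> Hu Hw HNu HNw HR [p0 [Hp0 Hne]].
have [R1 R2] := HR.
have Hp0' : exists p, (1 <= p <= N)%N /\ w p%:Z < u p%:Z.
  exists p0; split => //; have := R1 p0%:Z (_ : 0 < p0%:Z); lia.
have [j [Hj Hjlt Hminj]] := ex_min (fun p : nat => u p%:Z) Hp0'.
have MinD : forall p : int, 0 < p -> w p < u p -> u j%:Z <= u p.
  move=> p Hp Hwp; case: (lerP p N%:Z) => HpN.
    have E : p = (absz p)%:Z by lia.
    rewrite E in Hwp *; apply: Hminj => //; lia.
  rewrite HNu ?HNw in Hwp; lia.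
have R1n : forall p : nat, (1 <= p <= N)%N -> w p%:Z <= u p%:Z by move=> p Hp; apply: R1; lia.
have [k' [Hk' A1 A2 A3]] := exists_A1 Hu Hw HNu HNw Hj R1n Hjlt Hminj.
have Hk'' : exists p, (1 <= p <= N)%N /\ (- u j%:Z < u p%:Z /\ w p%:Z <= - u j%:Z).
  by exists k'.
have [k [Hk [K1 K2] Hmink]] := ex_min (fun p : nat => u p%:Z) Hk''.
have Hab : `|u j%:Z| <= N%:Z by apply: (B_bound Hu HNu); lia.
have MinK : forall p : int, 0 < p -> - u j%:Z < u p -> w p <= - u j%:Z -> u k%:Z <= u p.
  move=> p Hp H1 H2; case: (lerP p N%:Z) => HpN.
    have E : p = (absz p)%:Z by lia.
    rewrite E in H1 H2 *; apply: Hmink => //; lia.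
  rewrite HNw in H2; lia.
have Hstar : u k%:Z <= - w j%:Z.
  have := Hmink k' Hk' (conj A1 A3); lia.
case: (eqVneq k j) => [Ekj|Hkj].
  rewrite Ekj in K1 K2 MinK.
  apply: (step_refl Hu Hw HNu HNw HR Hj) => //; lia.
have Hj0 : 0 < j%:Z by lia.
have Hk0 : 0 < k%:Z by lia.
have Hkj' : k%:Z != j%:Z by lia.
have [Hd1 Hd2] := B_dist Hu Hk0 Hj0 Hkj'.
have Hajk : u j%:Z < u k%:Z.
  have := MinD k%:Z Hk0 (_ : w k%:Z < u k%:Z); lia.
have Ha0 : u j%:Z != 0 by apply: (B_nz Hu); lia.
have Ha : u j%:Z < 0.
  case: (ltrP (u j%:Z) 0) => // Hpos.
  have := MinK j%:Z Hj0 (_ : - u j%:Z < u j%:Z) (_ : w j%:Z <= - u j%:Z); lia.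
apply: (step_pair Hu Hw HNu HNw HR Hj Hk Hkj) => //; lia.
Qed.

Lemma bruhat0_cons u v w : cover0 u v -> bruhat0 v w -> bruhat0 u w.
Proof.
move=> Huv H; move: u Huv; induction H as [v w Evw | v x w Hvx IH Hxw] => u Huv.
  have E : v = w by apply: functional_extensionality.
  subst w; exact: (bruhat0_step (bruhat0_refl (fun x => erefl (u x))) Huv).
exact: (bruhat0_step (IH u Huv) Hxw).
Qed.

Lemma mu_ge0 N v w : Rrel v w -> 0 <= mu N v w.
Proof.
move=> [R1 _]; apply: sum_ge0' => k; rewrite mem_index_iota => Hk _.
have := R1 k%:Z (_ : 0 < k%:Z); lia.
Qed.

Lemma B_eq u w N : inBinf u -> inBinf w -> supp_bound N u -> supp_bound N w ->
  (forall p : nat, (1 <= p <= N)%N -> u p%:Z = w p%:Z) -> u = w.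
Proof.
move=> Hu Hw HNu HNw H; apply: functional_extensionality => x.
case: (ltrP N%:Z `|x|) => Hx; first by rewrite HNu ?HNw.
case: (ltrgtP x 0) => Hx0.
- have E : x = - (absz x)%:Z by lia.
  rewrite E (B_odd Hu) (B_odd Hw) H //; lia.
- have E : x = (absz x)%:Z by lia.
  rewrite E H //; lia.
- by rewrite Hx0 (B0 Hu) (B0 Hw).
Qed.

Lemma suff_ind w N : inBinf w -> supp_bound N w -> forall n : nat, forall u,
  inBinf u -> supp_bound N u -> Rrel u w -> (absz (mu N u w) <= n)%N -> bruhat0 u w.
Proof.
move=> Hw HNw n; elim: n => [|n IH] u Hu HNu HR Hmu.
all: case: (classic (exists p : nat, (1 <= p <= N)%N /\ u p%:Z != w p%:Z)) => Hex.
- have [v [Hc HR' Hv HNv Hlt]] := step Hu Hw HNu HNw HR Hex.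
  have := mu_ge0 N HR'; have := mu_ge0 N HR; lia.
- have -> : u = w.
    apply: (B_eq Hu Hw HNu HNw) => p Hp; apply/eqP; apply: negbNE; apply/negP => Hn.
    by apply: Hex; exists p.
  exact: bruhat0_refl.
- have [v [Hc HR' Hv HNv Hlt]] := step Hu Hw HNu HNw HR Hex.
  apply: (bruhat0_cons Hc); apply: IH => //.
  have := mu_ge0 N HR'; have := mu_ge0 N HR; lia.
- have -> : u = w.
    apply: (B_eq Hu Hw HNu HNw) => p Hp; apply/eqP; apply: negbNE; apply/negP => Hn.
    by apply: Hex; exists p.
  exact: bruhat0_refl.
Qed.

Lemma supp_mono N M f : (N <= M)%N -> supp_bound N f -> supp_bound M f.
Proof. move=> HNM H a Ha; apply: H; lia. Qed.

Unset Implicit Arguments.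

Theorem proposition2p3 (u w : int -> int) :
  inBinf u -> inBinf w ->
  (bruhat0 u w <->
   ((forall i : int, 0 < i -> w i <= u i) /\
    (forall i j : int, 0 < i -> i < j -> u i < u j -> w i < w j))).
Proof.
move=> Hu Hw; split.
  move=> H; clear Hu Hw; induction H as [u w Euw | u v w Huv IH Hvw].
    have E : u = w by apply: functional_extensionality.
    subst w; exact: Rrel_refl.
  exact: (Rrel_trans IH (cover_R Hvw)).
move=> HR.
have [_ _ [N1 HN1]] := Hu; have [_ _ [N2 HN2]] := Hw.
have HNu : supp_bound (maxn N1 N2) u by apply: (supp_mono _ HN1); lia.
have HNw : supp_bound (maxn N1 N2) w by apply: (supp_mono _ HN2); lia.
exact: (suff_ind Hw HNw Hu HNu HR (leqnn _)).
Qed.
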